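(* Let $n\ge 2$ be an integer and $A\subseteq L_n$. The subspace $(L_n,\tau(A)|_{L_n})$ of $(X_n,\tau(A))$ is Lindelöf if and only if $L_n\setminus A$ does not contain a closed uncountable subset of $(L_n,\tau_E|_{L_n})$.
   Context: For $\overline{x},\overline{a}\in\mathbb R^n$ let $|\overline{x}-\overline{a}|$ be the Euclidean distance and $B(\overline{a},\epsilon)=\{\overline{x}\in\mathbb R^n:|\overline{x}-\overline{a}|<\epsilon\}$. Let $P_n=\{\overline{x}\in\mathbb R^n: x_n>0\}$, $L_n=\{\overline{x}\in\mathbb R^n: x_n=0\}$, $X_n=P_n\cup L_n$, and let $\tau_E$ denote the Euclidean topology on $X_n$. For $\overline{a}\in L_n$ and $\epsilon>0$ put $\overline{a(\epsilon)}=(a_1,\dots,a_{n-1},\epsilon)$ and $\tilde B(\overline{a},\epsilon)=\{\overline{a}\}\cup B(\overline{a(\epsilon)},\epsilon)$. For $A\subseteq L_n$, the topology $\tau(A)$ on $X_n$ is generated by the local bases: at $\overline{a}\in P_n$, the sets $B(\overline{a},\epsilon)$ with $0<\epsilon<a_n$; at $\overline{a}\in A$, the sets $B(\overline{a},\epsilon)\cap X_n$ with $\epsilon>0$; at $\overline{a}\in L_n\setminus A$, the sets $\tilde B(\overline{a},\epsilon)$ with $\epsilon>0$. *)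

(* Defs.v *)
From mathcomp Require Import all_boot all_order all_algebra.
From mathcomp Require Import boolp classical_sets cardinality reals.
Set Implicit Arguments. Unset Strict Implicit. Unset Printing Implicit Defensive.
Import Order.TTheory GRing.Theory Num.Theory.
Local Open Scope ring_scope.
Local Open Scope classical_set_scope.

Section Defs.
Variable R : realType.
Variable n : nat.

Definition pt := 'I_n -> R.

Definition edist (x a : pt) : R := Num.sqrt (\sum_(i < n) (x i - a i) ^+ 2).

Definition eball (a : pt) (eps : R) : set pt := [set x | edist x a < eps].

(* the n-th (last) coordinate x_n, i.e. index n-1 (meaningful for n >= 1) *)
Definition lastc (x : pt) : R :=
  match insub n.-1 with Some i => x i | None => 0 end.

Definition Pn : set pt := [set x | 0 < lastc x].
Definition Ln : set pt := [set x | lastc x = 0].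
Definition Xn : set pt := Pn `|` Ln.

Definition shift_pt (a : pt) (eps : R) : pt :=
  fun i => if val i == n.-1 then eps else a i.

Definition tball (a : pt) (eps : R) : set pt :=
  [set a] `|` eball (shift_pt a eps) eps.

Definition basic_nbhd (A : set pt) (a : pt) (N : set pt) : Prop :=
  (Pn a /\ exists eps, 0 < eps /\ eps < lastc a /\ N = eball a eps) \/
  (A a /\ exists eps, 0 < eps /\ N = eball a eps `&` Xn) \/
  (Ln a /\ ~ A a /\ exists eps, 0 < eps /\ N = tball a eps).

Definition tauA_open (A : set pt) (U : set pt) : Prop :=
  U `<=` Xn /\ forall a, U a -> exists N, basic_nbhd A a N /\ N `<=` U.

Definition tauA_Ln_open (A : set pt) (V : set pt) : Prop :=
  exists U, tauA_open A U /\ V = U `&` Ln.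

Definition Ln_tauA_Lindelof (A : set pt) : Prop :=
  forall F : set (set pt),
    (forall V, F V -> tauA_Ln_open A V) ->
    Ln `<=` \bigcup_(V in F) V ->
    exists G : set (set pt), [/\ G `<=` F, countable G & Ln `<=` \bigcup_(V in G) V].

Definition Ln_euclid_closed (C : set pt) : Prop :=
  C `<=` Ln /\
  forall x, Ln x -> ~ C x -> exists eps, 0 < eps /\ eball x eps `&` Ln `<=` ~` C.

End Defs.

(* Main.v *)
Require Import Defs.
From mathcomp Require Import all_boot all_order all_algebra.
From mathcomp Require Import boolp classical_sets cardinality reals.
From mathcomp Require Import ring lra.
Set Implicit Arguments. Unset Strict Implicit. Unset Printing Implicit Defensive.
Import Order.TTheory GRing.Theory Num.Theory.
Local Open Scope ring_scope.
Local Open Scope classical_set_scope.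

Section Analytic.
Variable R : realType.
Variable n : nat.
Implicit Types (x a y z : pt R n).

Lemma cs (u v : 'I_n -> R) :
  \sum_i u i * v i <= Num.sqrt (\sum_i u i ^+ 2) * Num.sqrt (\sum_i v i ^+ 2).
Proof.
pose A : R := Num.sqrt (\sum_i u i ^+ 2).
pose B : R := Num.sqrt (\sum_i v i ^+ 2). pose S : R := \sum_i u i * v i.
rewrite -/A -/B -/S.
have gu : 0 <= \sum_i u i ^+ 2 by apply: sumr_ge0 => i _; exact: sqr_ge0.
have gv : 0 <= \sum_i v i ^+ 2 by apply: sumr_ge0 => i _; exact: sqr_ge0.
have hA2 : A ^+ 2 = \sum_i u i ^+ 2 by rewrite sqr_sqrtr.
have hB2 : B ^+ 2 = \sum_i v i ^+ 2 by rewrite sqr_sqrtr.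
have hA : 0 <= A := sqrtr_ge0 _.
have hB : 0 <= B := sqrtr_ge0 _.
have key : 0 <= \sum_i (B * u i - A * v i) ^+ 2.
  by apply: sumr_ge0 => i _; exact: sqr_ge0.
have expand : \sum_i (B * u i - A * v i) ^+ 2 =
   B ^+ 2 * (\sum_i u i ^+ 2) - (2 * A * B) * S + A ^+ 2 * (\sum_i v i ^+ 2).
  rewrite (_ : \sum_i (B * u i - A * v i) ^+ 2 = \sum_i (B ^+ 2 * u i ^+ 2 - (2 * A * B) * (u i * v i) + A ^+ 2 * v i ^+ 2)); last by apply: eq_bigr => i _; ring.
  by rewrite big_split sumrB /= !mulr_sumr.
rewrite expand -hA2 -hB2 in key.
have [A0|Apos] := eqVneq A 0.
  have : \sum_i u i ^+ 2 = 0 by rewrite -hA2 A0 expr0n.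
  move/psumr_eq0P => h0.
  rewrite A0 mul0r /S big1 // => i _.
  have : u i ^+ 2 = 0 by apply: h0 => // j _; exact: sqr_ge0.
  by move/eqP; rewrite sqrf_eq0 => /eqP ->; rewrite mul0r.
have [B0|Bpos] := eqVneq B 0.
  have : \sum_i v i ^+ 2 = 0 by rewrite -hB2 B0 expr0n.
  move/psumr_eq0P => h0.
  rewrite B0 mulr0 /S big1 // => i _.
  have : v i ^+ 2 = 0 by apply: h0 => // j _; exact: sqr_ge0.
  by move/eqP; rewrite sqrf_eq0 => /eqP ->; rewrite mulr0.
have Ap : 0 < A by rewrite lt_def Apos hA.
have Bp : 0 < B by rewrite lt_def Bpos hB.
have ABp : 0 < A * B by apply: mulr_gt0.
nra.
Qed.

Lemma edist_tri x y z : edist x z <= edist x y + edist y z.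
Proof.
rewrite /edist.
set u := fun i => x i - y i; set v := fun i => y i - z i.
have -> : \sum_i (x i - z i) ^+ 2 = \sum_i (u i + v i) ^+ 2.
  by apply: eq_bigr => i _; rewrite /u /v; congr (_ ^+ 2); ring.
rewrite -/(\sum_i u i ^+ 2) -/(\sum_i v i ^+ 2).
pose A : R := Num.sqrt (\sum_i u i ^+ 2); pose B : R := Num.sqrt (\sum_i v i ^+ 2).
rewrite -/A -/B.
have hAB : 0 <= A + B by apply: addr_ge0; exact: sqrtr_ge0.
rewrite -(ger0_norm hAB) -sqrtr_sqr ler_sqrt; last exact: sqr_ge0.
have gu : 0 <= \sum_i u i ^+ 2 by apply: sumr_ge0 => i _; exact: sqr_ge0.
have gv : 0 <= \sum_i v i ^+ 2 by apply: sumr_ge0 => i _; exact: sqr_ge0.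
have hA2 : A ^+ 2 = \sum_i u i ^+ 2 by rewrite sqr_sqrtr.
have hB2 : B ^+ 2 = \sum_i v i ^+ 2 by rewrite sqr_sqrtr.
have -> : \sum_i (u i + v i) ^+ 2 =
   \sum_i u i ^+ 2 + 2 * (\sum_i u i * v i) + \sum_i v i ^+ 2.
  rewrite mulr_sumr -!big_split /=; apply: eq_bigr => i _; ring.
have := cs u v; rewrite -/A -/B => h.
rewrite -hA2 -hB2; nra.
Qed.

Lemma edist_sym x y : edist x y = edist y x.
Proof. by rewrite /edist; congr Num.sqrt; apply: eq_bigr => i _; ring. Qed.

Lemma edist_ge0 x y : 0 <= edist x y.
Proof. exact: sqrtr_ge0. Qed.

Lemma edist_coord x y (k : 'I_n) : `|x k - y k| <= edist x y.
Proof.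
rewrite /edist -sqrtr_sqr ler_sqrt; last first.
  by apply: sumr_ge0 => i _; exact: sqr_ge0.
rewrite (bigD1 k) //= lerDl; apply: sumr_ge0 => i _; exact: sqr_ge0.
Qed.

Lemma edist_xx x : edist x x = 0.
Proof. by rewrite /edist big1 ?sqrtr0 // => i _; rewrite subrr expr0n. Qed.

Lemma ball_in_ball a s r : edist a s < r ->
  exists eps, 0 < eps /\ eball a eps `<=` eball s r.
Proof.
move=> h; exists (r - edist a s); split; first by rewrite subr_gt0.
move=> y; rewrite /eball /= => hy.
have := edist_tri y a s; lra.
Qed.

Lemma approx a eps : 0 < eps ->
  exists (q : {ffun 'I_n -> rat}) (r : rat),
    edist a (fun i => ratr (q i)) < ratr r /\
    eball (fun i => ratr (q i)) (ratr r) `<=` eball a eps.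
Proof.
move=> he.
have [r] : exists r : rat, ratr r \in `](0:R), eps / 2[%R.
  by apply: rat_in_itvoo; lra.
rewrite in_itv /= => /andP[r0 r2].
set d := (ratr r : R) / (n.+1)%:R.
have Np : 0 < (n.+1)%:R :> R by rewrite ltr0n.
have dp : 0 < d by rewrite /d divr_gt0.
have rd : (ratr r : R) = (n.+1)%:R * d by rewrite /d mulrC divfK // gt_eqF.
have hq : forall i : 'I_n, exists q : rat, ratr q \in `](a i - d), (a i + d)[%R.
  by move=> i; apply: rat_in_itvoo; lra.
have [f hf] := choice hq.
have hd : edist a (fun i => ratr (finfun f i)) < ratr r.
  rewrite /edist.
  have hr : 0 <= (ratr r : R) by lra.
  rewrite -(ger0_norm hr) -sqrtr_sqr ltr_sqrt; last by rewrite exprn_gt0.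
  apply: (@le_lt_trans _ _ (\sum_(i < n) d ^+ 2)).
    apply: ler_sum => i _; rewrite ffunE.
    move: (hf i); rewrite in_itv /= => /andP[h1 h2]; nra.
  rewrite sumr_const card_ord -mulr_natr rd.
  have : (0 : R) <= n%:R by rewrite ler0n.
  rewrite -natr1; nra.
exists (finfun f), r; split => //.
move=> y; rewrite /eball /= => hy.
have := edist_tri y (fun i => ratr (finfun f i)) a.
have := edist_sym a (fun i => ratr (finfun f i)); lra.
Qed.
End Analytic.

Lemma countableU T (X Y : set T) : countable X -> countable Y -> countable (X `|` Y).
Proof.
move=> cX cY.
have -> : X `|` Y = \bigcup_(b in [set: bool]) (if b then X else Y).
  apply/seteqP; split => x.
    by case=> h; [exists true | exists false].
  by case=> -[] _ h; [left | right].
by apply: bigcup_countable => // -[].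
Qed.

Section Topo.
Variable R : realType.
Variable n : nat.
Hypothesis hn : (2 <= n)%N.
Implicit Types (x a y c : pt R n).

Lemma k_lt : (n.-1 < n)%N.
Proof. by rewrite ltn_predL (leq_trans _ hn). Qed.
Let k : 'I_n := Ordinal k_lt.

Lemma lastcE x : lastc x = x k.
Proof.
rewrite /lastc; case: insubP => [i _ hi | h].
  by congr x; apply: val_inj; rewrite hi.
by rewrite k_lt in h.
Qed.

Lemma shiftk a e : shift_pt a e k = e.
Proof. by rewrite /shift_pt eqxx. Qed.

Lemma Ln_notPn x : Ln x -> ~ Pn x.
Proof. by rewrite /Ln /Pn /= => ->; rewrite ltxx. Qed.

Lemma ball_Pn a eps : eps <= lastc a -> eball a eps `<=` @Pn R n.
Proof.
move=> h y; rewrite /eball /Pn /= => hy; rewrite lastcE; rewrite lastcE in h.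
have h1 := edist_coord a y k; rewrite edist_sym in hy.
have h2 := ler_norm (a k - y k); lra.
Qed.

Lemma shift_ball_Pn c e : eball (shift_pt c e) e `<=` @Pn R n.
Proof.
move=> y; rewrite /eball /Pn /= => hy; rewrite lastcE.
have h1 := edist_coord (shift_pt c e) y k; rewrite edist_sym in hy.
rewrite shiftk in h1.
have h2 := ler_norm (e - y k); lra.
Qed.

Lemma Pn_ball_in a s r : Pn a -> edist a s < r ->
  exists eps, [/\ 0 < eps, eps < lastc a & eball a eps `<=` eball s r].
Proof.
rewrite /Pn /= => Pa h.
have [e1 [he1 hs]] := ball_in_ball h.
have [le|lt] := leP e1 (lastc a / 2).
  exists e1; split => //; lra.
exists (lastc a / 2); split; [lra | lra |].
move=> y; rewrite /eball /= => hy; apply: hs; rewrite /eball /=; lra.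
Qed.

Lemma tball_open (A : set (pt R n)) c : Ln c -> ~ A c -> tauA_open A (tball c 1).
Proof.
move=> Lc nAc; split.
  move=> x [-> | hx]; [by right | left; exact: shift_ball_Pn hx].
move=> a [-> | ha].
  exists (tball c 1); split => //; right; right; split => //; split => //.
  by exists 1; split.
have Pa := shift_ball_Pn ha.
have [eps [he hl hs]] := Pn_ball_in Pa ha.
exists (eball a eps); split; last by move=> y hy; right; exact: hs.
by left; split => //; exists eps.
Qed.

Lemma tball_Ln c : Ln c -> tball c 1 `&` @Ln R n = [set c].
Proof.
move=> Lc; apply/seteqP; split => x.
  by move=> [[-> | hx] Lx] //; exfalso; exact: Ln_notPn Lx (shift_ball_Pn hx).
by move=> ->; split => //; left.
Qed.

Lemma compl_open (A C : set (pt R n)) : Ln_euclid_closed C -> C `<=` ~` A ->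
  tauA_open A (@Pn R n `|` (@Ln R n `\` C)).
Proof.
move=> [CL Ccl] CA; split.
  by move=> x [Px | [Lx _]]; [left | right].
move=> a [Pa | [La nCa]].
  have Pa' : 0 < lastc a by [].
  exists (eball a (lastc a / 2)); split.
    rewrite /basic_nbhd; left; split => //; exists (lastc a / 2); split; [lra | split; [lra | by []]].
  move=> y hy; left; apply: (@ball_Pn a (lastc a / 2)) => //; lra.
have [Aa | nAa] := pselect (A a).
  have [eps [he hs]] := Ccl a La nCa.
  exists (eball a eps `&` @Xn R n); split.
    by right; left; split => //; exists eps.
  move=> y [ey [Py | Ly]]; first by left.
  by right; split => //; exact: (hs y (conj ey Ly)).
exists (tball a 1); split.
  by right; right; split => //; split => //; exists 1.
by move=> y [-> | hy]; [right | left; exact: shift_ball_Pn hy].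
Qed.

End Topo.

Theorem mainTheorem11 (R : realType) (n : nat) (hn : (2 <= n)%N) (A : set (pt R n))
  (hA : A `<=` Ln (R:=R) (n:=n)) :
  Ln_tauA_Lindelof A <->
  ~ (exists C : set (pt R n),
       [/\ C `<=` Ln (R:=R) (n:=n) `\` A, Ln_euclid_closed C & ~ countable C]).
Proof.
split.
  move=> hL [C [hCsub hCcl hCnc]]; apply: hCnc.
  have CnA : C `<=` ~` A by move=> x /hCsub [].
  pose F : set (set (pt R n)) :=
    [set (@Ln R n `\` C)] `|` [set V | exists2 c, C c & V = [set c]].
  have hF1 : forall V, F V -> tauA_Ln_open A V.
    move=> V [-> | [c Cc ->]].
      exists (@Pn R n `|` (@Ln R n `\` C)); split; first exact: compl_open.
      apply/seteqP; split => x.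
        by move=> [Lx nCx]; split; [right | ].
      by move=> [[Px | //] Lx]; exfalso; exact: Ln_notPn Lx Px.
    have [Lc nAc] := hCsub c Cc.
    exists (tball c 1); split; [exact: tball_open | by rewrite tball_Ln].
  have hF2 : @Ln R n `<=` \bigcup_(V in F) V.
    move=> x Lx; have [Cx | nCx] := pselect (C x).
      by exists [set x] => //; right; exists x.
    by exists (@Ln R n `\` C) => //; left.
  have [G [GF Gc Gcov]] := hL F hF1 hF2.
  apply: (sub_countable (subset_card_le (B := \bigcup_(V in G) (V `&` C)) _)).
    move=> x Cx; have [V GV Vx] := Gcov x (hCsub x Cx).1.
    by exists V.
  apply: bigcup_countable => // V GV.
  case: (GF V GV) => [-> | [c Cc ->]].
    rewrite (_ : _ `&` _ = set0) //; apply/seteqP; split => x //.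
    by move=> [[_ ?] ?].
  exact: (sub_countable (subset_card_le (@subIsetl _ _ _)) (countable1 c)).
move=> hno F hFo hcov.
pose qpt (p : {ffun 'I_n -> rat} * rat) : pt R n := fun i => ratr (p.1 i).
pose Bq p := eball (qpt p) (ratr p.2).
pose good p := exists V, F V /\ Bq p `&` @Ln R n `<=` V.
have hexf : forall p, exists V, good p -> F V /\ Bq p `&` @Ln R n `<=` V.
  move=> p; case: (pselect (good p)) => [[V hV] | ng]; first by exists V.
  by exists set0.
have [f hf] := choice hexf.
have hexg : forall x, exists V, Ln x -> F V /\ V x.
  move=> x; case: (pselect (Ln x)) => Lx; last by exists set0.
  by have [V FV Vx] := hcov x Lx; exists V.
have [g hg] := choice hexg.
pose C := [set x | Ln x /\ forall p, good p -> ~ Bq p x].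
have notC : forall x, Ln x -> ~ C x -> exists p, good p /\ Bq p x.
  move=> x Lx nCx; apply: contrapT => hne; apply: nCx; split => // p gp Bx.
  by apply: hne; exists p.
have CA : C `<=` @Ln R n `\` A.
  move=> x [Lx hx]; split => // Ax.
  have [V FV Vx] := hcov x Lx.
  have [U [[UX Uo] VE]] := hFo V FV.
  have Ux : U x by move: Vx; rewrite VE => -[].
  have [N [hN NU]] := Uo x Ux.
  case: hN => [[Px _] | [[_ [eps [he NE]]] | [_ [nA _]]]].
  - exact: Ln_notPn Lx Px.
  - have [q [r [hxq hsub]]] := approx x he.
    apply: (hx (q, r)); last exact: hxq.
    exists V; split => // y [By Ly]; rewrite VE; split => //; apply: NU.
    by rewrite NE; split; [exact: hsub | right].
  - exact: nA Ax.
have Ccl : Ln_euclid_closed C.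
  split; first by move=> x [].
  move=> x Lx nCx.
  have [p [gp Bx]] := notC x Lx nCx.
  have [eps [he hs]] := ball_in_ball Bx.
  exists eps; split => // y [ey Ly] [_ hy]; exact: hy p gp (hs y ey).
have Cc : countable C.
  by apply: contrapT => nc; apply: hno; exists C; split.
exists ((f @` good) `|` (g @` C)); split.
- move=> V [[p gp <-] | [x Cx <-]]; [exact: (hf p gp).1 | exact: (hg x Cx.1).1].
- apply: countableU.
    exact: (sub_countable (card_image_le f good) (countableP good)).
  exact: (sub_countable (card_image_le g C) Cc).
- move=> x Lx; case: (pselect (C x)) => Cx.
    by exists (g x); [right; exists x | exact: (hg x Lx).2].
  have [p [gp Bx]] := notC x Lx Cx.
  by exists (f p); [left; exists p | apply: (hf p gp).2; split].
Qed.
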